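(* Let $\alpha\in[0,1)\cup(1,2]$ and $c>0$, and let $s_{\alpha,c}$ be the SIGTRON function defined below. For $z\ge0$ and $b>0$ let $F(z;b)=\int_0^z\frac{1}{1+t^{1/b}}\,dt$. Define $L^S_{\alpha,c}:\mathbb R\to\mathbb R$ as follows. (1) If $\alpha\in(1,2]$: $L^S_{\alpha,c}(x)=-c_\alpha F\!\left(1+\frac{x}{c_\alpha};\alpha-1\right)+c_\alpha$ for $x\ge -c_\alpha$, and $L^S_{\alpha,c}(x)=-x$ otherwise. (2) If $\alpha\in[0,1)$: $L^S_{\alpha,c}(x)=c_\alpha F\!\left(1+\frac{x}{c_\alpha};1-\alpha\right)-c_\alpha-x$ for $x\le -c_\alpha$, and $L^S_{\alpha,c}(x)=0$ otherwise. Then $L^S_{\alpha,c}$ is differentiable on $\mathbb R$ and satisfies $\nabla L^S_{\alpha,c}(x)=s_{\alpha,c}(x)-1$ for all $x\in\mathbb R$ (so $L^S_{\alpha,c}$ is, up to an additive constant, the virtual SIGTRON-induced loss function, i.e. the function whose derivative is $s_{\alpha,c}-1$).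
   Context: For $c>0$ and $\alpha\ne1$, $c_\alpha=\frac{1}{\alpha-1}c^{1-\alpha}$ (so $c_\alpha>0$ for $\alpha>1$ and $c_\alpha<0$ for $\alpha<1$). The extended exponential is $\exp_{\alpha,c}(x)=c\left(1-\frac{x}{c_\alpha}\right)^{1/(1-\alpha)}$ with domain $\{x\ge c_\alpha\}$ if $0\le\alpha<1$ and $\{x<c_\alpha\}$ if $\alpha>1$. The extended asymmetric sigmoid is $\sigma_{\alpha,c}(x)=\frac{c}{c+\exp_{\alpha,c}(-x)}$ with domain $\{x\le -c_\alpha\}$ if $0\le\alpha<1$ and $\{x\ge -c_\alpha\}$ if $\alpha>1$ (with $\sigma_{\alpha,c}(-c_\alpha)=0$ for $\alpha>1$). SIGTRON is $s_{\alpha,c}(x)=\sigma_{\alpha,c}(x)$ for $x\in\mathrm{dom}(\sigma_{\alpha,c})$ and $s_{\alpha,c}(x)=\sigma_P(x)$ otherwise, where $\sigma_P(x)=1$ if $x\ge0$ and $0$ otherwise. The virtual SIGTRON-induced loss $L^S_{\alpha,c}$ is defined by the gradient equation $\nabla L^S_{\alpha,c}(x)=s_{\alpha,c}(x)-1$. *)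

(* Defs.v *)
From Stdlib Require Import Reals Lra.
From Coquelicot Require Import Coquelicot.
Open Scope R_scope.

(* real power t^y for t >= 0, with the convention 0^y = 0 (used only for y > 0
   or where the base is positive); Rpower itself is only meaningful for t > 0 *)
Definition rpow (t y : R) : R := if Rle_dec t 0 then 0 else Rpower t y.

Definition c_al (al c : R) : R := / (al - 1) * Rpower c (1 - al).

(* extended exponential exp_{alpha,c}(x) = c (1 - x/c_alpha)^(1/(1-alpha)),
   meaningful on its domain {x >= c_alpha} (alpha<1) / {x < c_alpha} (alpha>1) *)
Definition exp_ext (al c x : R) : R :=
  c * rpow (1 - x / c_al al c) (/ (1 - al)).

Definition sig_dom (al c x : R) : Prop :=
  (0 <= al < 1 /\ x <= - c_al al c) \/ (1 < al /\ x >= - c_al al c).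

Definition sigma_ext (al c x : R) : R :=
  if Rlt_dec 1 al then
    (if Req_EM_T x (- c_al al c) then 0 else c / (c + exp_ext al c (- x)))
  else c / (c + exp_ext al c (- x)).

Definition sigma_P (x : R) : R := if Rle_dec 0 x then 1 else 0.

Definition sigtron (al c x : R) : R :=
  if Rlt_dec 1 al then
    (if Rge_dec x (- c_al al c) then sigma_ext al c x else sigma_P x)
  else if Rle_dec 0 al then
    (if Rlt_dec al 1 then
       (if Rle_dec x (- c_al al c) then sigma_ext al c x else sigma_P x)
     else sigma_P x)
  else sigma_P x.

Definition Fint (z b : R) : R :=
  RInt (fun t => 1 / (1 + rpow t (/ b))) 0 z.

Definition LS (al c x : R) : R :=
  if Rlt_dec 1 al then
    (if Rle_dec (- c_al al c) x
     then - c_al al c * Fint (1 + x / c_al al c) (al - 1) + c_al al c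
     else - x)
  else
    (if Rle_dec x (- c_al al c)
     then c_al al c * Fint (1 + x / c_al al c) (1 - al) - c_al al c - x
     else 0).

(* Main.v *)
Require Import Defs.
From Stdlib Require Import Reals Lra.
From Coquelicot Require Import Coquelicot.
Open Scope R_scope.

Lemma rpow_ge0 t y : 0 <= rpow t y.
Proof. unfold rpow; destruct (Rle_dec t 0). lra. unfold Rpower; left; apply exp_pos. Qed.

Lemma rpow_le_t t y : 0 < t <= 1 -> 1 <= y -> rpow t y <= t.
Proof.
  intros Ht Hy. unfold rpow; destruct (Rle_dec t 0). lra.
  unfold Rpower. rewrite <- (exp_ln t) at 2 by lra.
  assert (ln t <= 0). { rewrite <- ln_1. destruct (Req_dec t 1). subst; lra. left; apply ln_increasing; lra. }
  destruct (Req_dec (y * ln t) (ln t)). rewrite H0; lra.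
  left; apply exp_increasing. nra.
Qed.

Lemma g_cont y t : 1 <= y -> continuous (fun t => 1/(1+rpow t y)) t.
Proof.
  intros Hy.
  destruct (Rtotal_order t 0) as [Hn|[H0|Hp]].
  - apply continuous_ext_loc with (fun _ => 1).
    + assert (He : 0 < - t) by lra. exists (mkposreal _ He). intros u Hu.
      unfold ball in Hu; simpl in Hu; unfold AbsRing_ball, abs, minus, plus, opp in Hu; simpl in Hu.
      apply Rabs_def2 in Hu. unfold rpow; destruct (Rle_dec u 0). change (@eq R 1 (1/(1+0))); field. lra.
    + apply continuous_const.
  - subst t. apply filterlim_locally. intros eps.
    assert (Hd : 0 < Rmin 1 eps) by (apply Rmin_glb_lt; [lra| apply cond_pos]).
    exists (mkposreal _ Hd). intros u Hu.
    unfold ball in Hu; simpl in Hu; unfold AbsRing_ball, abs, minus, plus, opp in Hu; simpl in Hu.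
    unfold ball; simpl; unfold AbsRing_ball, abs, minus, plus, opp; simpl.
    rewrite Ropp_0, Rplus_0_r in Hu. apply Rabs_def2 in Hu.
    assert (Hm1 := Rmin_l 1 eps). assert (Hm2 := Rmin_r 1 eps).
    assert (r0 : rpow 0 y = 0) by (unfold rpow; destruct (Rle_dec 0 0); lra).
    rewrite r0.
    assert (Hr := rpow_ge0 u y).
    destruct (Rle_dec u 0).
    + assert (rpow u y = 0) by (unfold rpow; destruct (Rle_dec u 0); lra). rewrite H.
      replace (1 / (1 + 0) + - (1 / (1 + 0))) with 0 by field. rewrite Rabs_R0; apply cond_pos.
    + assert (Hl := rpow_le_t u y ltac:(lra) Hy).
      replace (1 / (1 + rpow u y) + - (1 / (1 + 0))) with (- (rpow u y / (1 + rpow u y))) by (field; lra).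
      rewrite Rabs_Ropp, Rabs_right.
      * apply Rle_lt_trans with (rpow u y). apply Rcomplements.Rle_div_l; nra. lra.
      * apply Rle_ge, Rdiv_le_0_compat; lra.
  - apply continuous_ext_loc with (fun u => 1/(1+exp (y * ln u))).
    + exists (mkposreal _ Hp). intros u Hu.
      unfold ball in Hu; simpl in Hu; unfold AbsRing_ball, abs, minus, plus, opp in Hu; simpl in Hu.
      apply Rabs_def2 in Hu. unfold rpow; destruct (Rle_dec u 0). lra. reflexivity.
    + apply (ex_derive_continuous (K:=R_AbsRing) (V:=R_NormedModule) (fun u => 1/(1+exp (y * ln u)))). auto_derive. split. lra. split; auto.
      assert (0 < exp (y * ln t)) by apply exp_pos. lra.
Qed.

Definition gg b t := 1/(1+rpow t (/b)).

Lemma invb_ge1 b : 0 < b <= 1 -> 1 <= / b.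
Proof. intros Hb. rewrite <- Rinv_1. apply Rinv_le_contravar; lra. Qed.

Lemma F_neg z b : z <= 0 -> Fint z b = z.
Proof.
  intros Hz. unfold Fint.
  rewrite (RInt_ext _ (fun _ => 1)).
  - rewrite RInt_const. unfold scal; simpl; unfold mult; simpl. ring.
  - intros t Ht. rewrite Rmin_right in Ht by lra. rewrite Rmax_left in Ht by lra.
    unfold rpow; destruct (Rle_dec t 0). rewrite Rplus_0_r; unfold Rdiv; rewrite Rmult_1_l; apply Rinv_1. lra.
Qed.

Lemma F_der z b : 0 < b <= 1 -> is_derive (fun z => Fint z b) z (gg b z).
Proof.
  intros Hb. unfold Fint, gg.
  apply (is_derive_RInt (fun t => 1 / (1 + rpow t (/ b))) (fun z => RInt (fun t => 1 / (1 + rpow t (/ b))) 0 z) 0 z).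
  - exists (mkposreal 1 Rlt_0_1). intros w _. apply (RInt_correct (V:=R_CompleteNormedModule)).
    apply ex_RInt_continuous. intros; apply g_cont, invb_ge1, Hb.
  - apply g_cont, invb_ge1, Hb.
Qed.

Lemma Fcomp_der s k p q b x : 0 < b <= 1 -> k <> 0 ->
  is_derive (fun t => s * Fint (1 + t/k) b + p*t + q) x (s * (/k * gg b (1+x/k)) + p).
Proof.
  intros Hb Hk.
  assert (Hl : is_derive (fun t => 1 + t/k) x (/k)) by (auto_derive; [auto| field; auto]).
  assert (Hd := is_derive_comp (fun z => Fint z b) (fun t => 1 + t/k) x _ (/k) (F_der _ _ Hb) Hl).
  assert (H1 := is_derive_scal _ _ s _ Hd).
  assert (H2: is_derive (fun t => p*t + q) x p) by (auto_derive; [auto| ring]).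
  assert (H3 := is_derive_plus _ _ _ _ _ H1 H2).
  eapply is_derive_ext; [| exact H3].
  intro t; simpl. unfold plus; simpl. ring.
Qed.

Lemma Rpower_pos a y : 0 < Rpower a y.
Proof. apply exp_pos. Qed.

Lemma rpow_pos_eq u y : 0 < u -> rpow u y = Rpower u y.
Proof. intros; unfold rpow; destruct (Rle_dec u 0); lra. Qed.

Lemma rpow_neg_eq u y : u <= 0 -> rpow u y = 0.
Proof. intros; unfold rpow; destruct (Rle_dec u 0); lra. Qed.

Theorem lemma1 (al c : R) :
  (0 <= al < 1 \/ 1 < al <= 2) -> 0 < c ->
  forall x : R, is_derive (LS al c) x (sigtron al c x - 1).
Proof.
  intros Hal Hc x.
  assert (HP : 0 < Rpower c (1 - al)) by apply Rpower_pos.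
  destruct Hal as [Hal|Hal].
  -
    set (ca := c_al al c).
    assert (Hica : / ca < 0).
    { unfold ca, c_al. rewrite Rinv_mult. rewrite Rinv_inv.
      assert (0 < / Rpower c (1 - al)) by (apply Rinv_0_lt_compat; lra). nra. }
    assert (Hca : ca < 0).
    { unfold ca, c_al. assert (/ (al - 1) < 0) by (apply Rinv_lt_0_compat; lra). nra. }
    assert (Hb : 0 < 1 - al <= 1) by lra.
    assert (Hu : forall t, 1 + t / ca = (t + ca) * / ca) by (intro; field; lra).
    assert (Hg : forall t, LS al c t = ca * Fint (1 + t/ca) (1-al) + (-1)*t + (-ca)).
    { intro t. unfold LS. fold ca. destruct (Rlt_dec 1 al). lra.
      destruct (Rle_dec t (- ca)). ring.
      rewrite F_neg. field. lra.
      rewrite Hu. nra. }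
    eapply is_derive_ext. intro t; symmetry; apply Hg.
    replace (sigtron al c x - 1) with (ca * (/ ca * gg (1 - al) (1 + x / ca)) + -1).
    apply Fcomp_der; lra.
    unfold sigtron, gg. fold ca.
    destruct (Rlt_dec 1 al). lra. destruct (Rle_dec 0 al); [|lra]. destruct (Rlt_dec al 1); [|lra].
    destruct (Rle_dec x (- ca)).
    + unfold sigma_ext. destruct (Rlt_dec 1 al). lra.
      unfold exp_ext. fold ca.
      replace (1 - - x / ca) with (1 + x / ca) by (field; lra).
      assert (0 <= 1 + x/ca) by (rewrite Hu; nra).
      assert (Hr := rpow_ge0 (1 + x / ca) (/ (1 - al))).
      field. split; nra.
    + unfold sigma_P. destruct (Rle_dec 0 x); [|lra].
      rewrite rpow_neg_eq. field. lra. rewrite Hu; nra.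
  -
    set (ca := c_al al c).
    assert (Hca : 0 < ca).
    { unfold ca, c_al. assert (0 < / (al - 1)) by (apply Rinv_0_lt_compat; lra). nra. }
    assert (Hb : 0 < al - 1 <= 1) by lra.
    assert (Hg : forall t, LS al c t = - ca * Fint (1 + t/ca) (al-1) + 0*t + ca).
    { intro t. unfold LS. fold ca. destruct (Rlt_dec 1 al); [|lra].
      destruct (Rle_dec (- ca) t). ring.
      rewrite F_neg. field. lra.
      assert (1 + t / ca = (t + ca) / ca) by (field; lra).
      rewrite H. assert (0 < / ca) by (apply Rinv_0_lt_compat; lra). unfold Rdiv. nra. }
    eapply is_derive_ext. intro t; symmetry; apply Hg.
    replace (sigtron al c x - 1) with (- ca * (/ ca * gg (al - 1) (1 + x / ca)) + 0).
    apply Fcomp_der; lra.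
    unfold sigtron, gg. fold ca.
    destruct (Rlt_dec 1 al); [|lra].
    destruct (Rge_dec x (- ca)).
    + unfold sigma_ext. destruct (Rlt_dec 1 al); [|lra]. fold ca.
      destruct (Req_EM_T x (- ca)).
      * subst x. replace (1 + - ca / ca) with 0 by (field; lra).
        rewrite rpow_neg_eq by lra. field. lra.
      * unfold exp_ext. fold ca.
        replace (1 - - x / ca) with (1 + x / ca) by (field; lra).
        assert (Hu : 0 < 1 + x/ca).
        { assert (1 + x / ca = (x + ca) / ca) by (field; lra). rewrite H.
          apply Rdiv_lt_0_compat; lra. }
        rewrite !rpow_pos_eq by exact Hu.
        replace (/ (1 - al)) with (- / (al - 1)) by (field; lra).
        rewrite Rpower_Ropp.
        assert (0 < Rpower (1 + x / ca) (/ (al - 1))) by apply Rpower_pos.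
        field. split; [lra|]. split; [|lra].
        intro Hz. assert (0 < c * Rpower (1 + x / ca) (/ (al - 1)) + c). nra. nra.
    + unfold sigma_P. destruct (Rle_dec 0 x); [lra|].
      rewrite rpow_neg_eq. field. lra.
      assert (1 + x / ca = (x + ca) / ca) by (field; lra). rewrite H.
      assert (0 < / ca) by (apply Rinv_0_lt_compat; lra). unfold Rdiv. nra.
Qed.
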